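(* Let $K\ge 1$ be an integer, $\mathcal{I}=\{1,\dots,K\}$, and let $\lambda_i>0$, $\gamma_{ui}>0$, $\gamma_{di}>0$ ($i\in\mathcal{I}$), $\gamma_u>0$, $\gamma_d>0$ be given, together with asset proportions $m_i>0$ ($i\in\mathcal{I}$) satisfying $\sum_{i\in\mathcal{I}} m_i<1$. Let $E=\{(h,n),(l,n)\}\cup\{(hi,o),(li,o): i\in\mathcal{I}\}$. Then there exists a unique function $\mu:E\to[0,\infty)$ (a steady state of the non-segmented market) satisfying \[0=-\mu(h,n)\sum_{i\in\mathcal{I}}\lambda_i\mu(li,o)+\gamma_u\mu(l,n)-\gamma_d\mu(h,n),\] \[0=-\lambda_i\mu(h,n)\mu(li,o)-\gamma_{ui}\mu(li,o)+\gamma_{di}\mu(hi,o)\quad\text{for all } i\in\mathcal{I},\] together with the constraints \[\mu(hi,o)+\mu(li,o)=m_i\ \ (i\in\mathcal{I}),\qquad \sum_{i\in\mathcal{I}}m_i+\mu(h,n)+\mu(l,n)=1.\]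
   Context: This is the stationary version of the non-segmented over-the-counter market model: $\mu(z)$ is the proportion of investors in state $z\in E$, where $(h,n)$/$(l,n)$ denote high/low liquidity-type investors owning no asset and $(hi,o)$/$(li,o)$ denote high/low-type investors owning asset $i$. The time-dependent dynamics are $\dot\mu_t(h,n)=-\mu_t(h,n)\sum_i\lambda_i\mu_t(li,o)+\gamma_u\mu_t(l,n)-\gamma_d\mu_t(h,n)$ and $\dot\mu_t(li,o)=-\lambda_i\mu_t(h,n)\mu_t(li,o)-\gamma_{ui}\mu_t(li,o)+\gamma_{di}\mu_t(hi,o)$ under the stated constraints; a steady state is a solution with zero time derivative. *)

(* Defs.v *)
From mathcomp Require Import all_boot all_order all_algebra.
From mathcomp Require Import all_classical all_reals.
Set Implicit Arguments. Unset Strict Implicit. Unset Printing Implicit Defensive.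
Import Order.TTheory GRing.Theory Num.Theory.
Local Open Scope ring_scope.

(* State space E = {(h,n),(l,n)} ∪ {(hi,o),(li,o) : i ∈ I}, I = 'I_K (indices 0..K-1). *)
Inductive state (K : nat) : Type :=
  | HN : state K
  | LN : state K
  | HO : 'I_K -> state K
  | LO : 'I_K -> state K.

Definition is_steady_state (R : realType) (K : nat)
  (lambda gui gdi : 'I_K -> R) (gu gd : R) (m : 'I_K -> R)
  (mu : state K -> R) : Prop :=
  (forall x, 0 <= mu x) /\
  0 = - mu (HN K) * (\sum_(i < K) lambda i * mu (LO i)) + gu * mu (LN K)
        - gd * mu (HN K) /\
  (forall i : 'I_K,
     0 = - lambda i * mu (HN K) * mu (LO i) - gui i * mu (LO i)
         + gdi i * mu (HO i)) /\
  (forall i : 'I_K, mu (HO i) + mu (LO i) = m i) /\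
  (\sum_(i < K) m i) + mu (HN K) + mu (LN K) = 1.

(* Main.v *)
Require Import Defs.
From mathcomp Require Import all_boot all_order all_algebra.
From mathcomp Require Import all_classical all_reals.
From mathcomp Require Import all_analysis.
From mathcomp Require Import ring lra.
Import Order.TTheory GRing.Theory Num.Theory.
Import numFieldNormedType.Exports.
Local Open Scope ring_scope.

Lemma cont_sum (R : realType) (I : Type) (r : seq I) (f : I -> R -> R) :
  (forall i, continuous (f i)) -> continuous (fun x => \sum_(i <- r) f i x).
Proof.
move=> hf x; elim: r => [|a r IH].
  under eq_fun do rewrite big_nil. exact: cvg_cst.
under eq_fun do rewrite big_cons.
exact: (continuousD (hf a x) IH).
Qed.

Lemma contG (R : realType) (K : nat) (A lam c : 'I_K -> R) (d : R) :
  (forall i, 0 <= lam i) -> (forall i, 0 < c i) ->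
  continuous (fun x : R => x * \sum_(i < K) A i * (lam i * `|x| + c i)^-1 + d * x).
Proof.
move=> hl hc x.
apply: (continuousD (f := fun x : R => x * \sum_(i < K) A i * (lam i * `|x| + c i)^-1) (g := fun x => d * x)).
  apply: (continuousM (s := fun x : R => x) (t := fun x : R => \sum_(i < K) A i * (lam i * `|x| + c i)^-1)); first exact: cvg_id.
  apply: (@cont_sum R _ (index_enum _) (fun i y => A i * (lam i * `|y| + c i)^-1)) => i y.
  apply: (continuousM (s := fun _ => A i) (t := fun y : R => (lam i * `|y| + c i)^-1)); first exact: cvg_cst.
  apply: (continuousV (s := fun y : R => (lam i * `|y| + c i))).
    by apply: lt0r_neq0; apply: ltr_wpDl; [apply: mulr_ge0 | ].
  apply: (continuousD (f := fun y : R => lam i * `|y|) (g := fun _ => c i)); last exact: cvg_cst.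
  apply: (continuousM (s := fun _ => lam i) (t := fun y : R => `|y|)); first exact: cvg_cst.
  exact: norm_continuous.
apply: (continuousM (s := fun _ => d) (t := fun x : R => x)); [exact: cvg_cst | exact: cvg_id].
Qed.

Lemma term_le (R : realType) (a l c x y : R) : 0 <= a -> 0 <= l -> 0 < c ->
  0 <= x -> x <= y -> x * (a * (l * x + c)^-1) <= y * (a * (l * y + c)^-1).
Proof.
move=> ha hl hc hx hxy.
have h1 : 0 < l * x + c by apply: ltr_wpDl => //; apply: mulr_ge0.
have h2 : 0 < l * y + c by apply: ltr_wpDl => //; apply: mulr_ge0; lra.
rewrite -subr_ge0.
have -> : y * (a * (l * y + c)^-1) - x * (a * (l * x + c)^-1)
   = a * c * (y - x) / ((l * x + c) * (l * y + c)).
  by field; apply/andP; split; apply: lt0r_neq0.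
apply: divr_ge0; last by apply: mulr_ge0; apply: ltW.
apply: mulr_ge0; [apply: mulr_ge0 => //; exact: ltW | lra].
Qed.

Lemma Gmono (R : realType) (K : nat) (A lam c : 'I_K -> R) (d x y : R) :
  (forall i, 0 <= A i) -> (forall i, 0 <= lam i) -> (forall i, 0 < c i) -> 0 < d ->
  0 <= x -> x < y ->
  x * \sum_(i < K) A i * (lam i * x + c i)^-1 + d * x <
  y * \sum_(i < K) A i * (lam i * y + c i)^-1 + d * y.
Proof.
move=> hA hl hc hd hx hxy.
apply: ler_ltD.
  rewrite !mulr_sumr; apply: ler_sum => i _; apply: term_le => //; exact: ltW.
by rewrite ltr_pM2l.
Qed.

Theorem proposition1 (R : realType) (K : nat) (hK : (1 <= K)%N)
  (lambda gui gdi : 'I_K -> R) (gu gd : R) (m : 'I_K -> R)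
  (hlambda : forall i, 0 < lambda i)
  (hgui : forall i, 0 < gui i) (hgdi : forall i, 0 < gdi i)
  (hgu : 0 < gu) (hgd : 0 < gd)
  (hm : forall i, 0 < m i) (hsum : \sum_(i < K) m i < 1) :
  exists! mu : state K -> R, is_steady_state lambda gui gdi gu gd m mu.
Proof.
set S := \sum_(i < K) m i.
set A := fun i => lambda i * (gdi i * m i).
set c := fun i => gui i + gdi i.
have hA : forall i, 0 <= A i.
  move=> i; rewrite /A; apply: mulr_ge0; [exact: ltW|apply: mulr_ge0; exact: ltW].
have hl : forall i, 0 <= lambda i by move=> i; exact: ltW.
have hc : forall i, 0 < c i by move=> i; rewrite /c; apply: addr_gt0.
have hden : forall i x, 0 <= x -> 0 < lambda i * x + c i.
  by move=> i x hx; apply: ltr_wpDl => //; apply: mulr_ge0.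
have charac : forall mu, is_steady_state lambda gui gdi gu gd m mu ->
   [/\ 0 <= mu (HN K),
       forall i, mu (LO i) = gdi i * m i * (lambda i * mu (HN K) + c i)^-1,
       forall i, mu (HO i) = m i - mu (LO i),
       mu (LN K) = 1 - S - mu (HN K) &
       mu (HN K) * \sum_(i < K) A i * (lambda i * mu (HN K) + c i)^-1
         + (gd + gu) * mu (HN K) = gu * (1 - S)].
  move=> mu [hpos [e1 [e2 [e3 e4]]]].
  have hLO : forall i, mu (LO i) = gdi i * m i * (lambda i * mu (HN K) + c i)^-1.
    move=> i; have hd := hden i _ (hpos (HN K)).
    apply: (@mulIf _ (lambda i * mu (HN K) + c i)); first exact: lt0r_neq0.
    rewrite divfK; last exact: lt0r_neq0.
    have := e2 i; rewrite -(e3 i) /c; lra.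
  have hLN : mu (LN K) = 1 - S - mu (HN K) by rewrite /S; lra.
  split => //.
  - by move=> i; rewrite -(e3 i); ring.
  - have -> : \sum_(i < K) A i * (lambda i * mu (HN K) + c i)^-1
        = \sum_(i < K) lambda i * mu (LO i).
      by apply: eq_bigr => i _; rewrite hLO /A; ring.
    rewrite hLN in e1; lra.
have uniq : forall mu1 mu2, is_steady_state lambda gui gdi gu gd m mu1 ->
    is_steady_state lambda gui gdi gu gd m mu2 -> mu1 = mu2.
  move=> mu1 mu2 /charac[p1 l1 h1 n1 g1] /charac[p2 l2 h2 n2 g2].
  have ex : mu1 (HN K) = mu2 (HN K).
    case: (ltgtP (mu1 (HN K)) (mu2 (HN K))) => // hlt.
    - have := @Gmono R K A lambda c (gd + gu) _ _ hA hl hc (addr_gt0 hgd hgu) p1 hlt; lra.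
    - have := @Gmono R K A lambda c (gd + gu) _ _ hA hl hc (addr_gt0 hgd hgu) p2 hlt; lra.
  have eL : forall i, mu1 (LO i) = mu2 (LO i) by move=> i; rewrite l1 l2 ex.
  apply: boolp.funext => -[||i|i] //.
  - by rewrite n1 n2 ex.
  - by rewrite h1 h2 eL.
suff [mu hmu] : exists mu, is_steady_state lambda gui gdi gu gd m mu.
  by exists mu; split => // mu' h'; apply: uniq.
-
  set b := 1 - S.
  have hb : 0 < b by rewrite /b subr_gt0.
  set G := fun x : R => x * \sum_(i < K) A i * (lambda i * `|x| + c i)^-1 + (gd + gu) * x.
  have Gc : {within `[0, b], continuous G}%classic.
    by apply: continuous_subspaceT; apply: contG.
  have G0 : G 0 = 0 by rewrite /G; ring.
  have Gb : gu * b <= G b.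
    rewrite /G ger0_norm; last exact: ltW.
    have : 0 <= b * \sum_(i < K) A i * (lambda i * b + c i)^-1.
      apply: mulr_ge0; first exact: ltW.
      apply: sumr_ge0 => i _; apply: mulr_ge0 => //.
      by rewrite invr_ge0; apply: ltW; apply: hden; apply: ltW.
    nra.
  have [x hx Gx] : exists2 x, x \in `[0, b] & G x = gu * b.
    apply: IVT => //; first exact: ltW.
    rewrite G0; apply/andP; split.
      by rewrite ge_min; apply/orP; left; apply: mulr_ge0; apply: ltW.
    by rewrite le_max; apply/orP; right.
  move: hx; rewrite in_itv /= => /andP[x0 xb].
  set L := fun i => gdi i * m i * (lambda i * x + c i)^-1.
  exists (fun s : state K => match s with
                   | HN => x | LN => b - x
                   | HO i => m i - L i | LO i => L i end).
  have hLi : forall i, (lambda i * x + c i) * L i = gdi i * m i.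
    move=> i; rewrite /L mulrC divfK //; apply: lt0r_neq0; exact: hden.
  split; [|split; [|split; [|split]]].
  + case=> [||i|i] //=.
    * lra.
    * have hd := hden i x x0.
      have -> : m i - L i = (lambda i * x + gui i) * m i / (lambda i * x + c i).
        by rewrite /L /c; field; move: hd; rewrite /c => /lt0r_neq0.
      apply: divr_ge0; last exact: ltW.
      apply: mulr_ge0; last exact: ltW.
      apply: addr_ge0; [apply: mulr_ge0 => // | exact: ltW].
    * rewrite /L; apply: mulr_ge0; first by apply: mulr_ge0; apply: ltW.
      by rewrite invr_ge0; apply: ltW; apply: hden.
  + move: Gx; rewrite /G ger0_norm //.
    have -> : \sum_(i < K) A i * (lambda i * x + c i)^-1
        = \sum_(i < K) lambda i * L i.
      by apply: eq_bigr => i _; rewrite /L /A; ring.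
    rewrite /b; lra.
  + move=> i /=; have := hLi i; rewrite /c; lra.
  + by move=> i /=; ring.
  + rewrite /= /b -/S; ring.
Qed.
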